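(* Let $p\ge1$, $f:\mathbb{R}^n\to\mathbb{R}$ be $p$ times continuously differentiable, $x_k\in\mathbb{R}^n$, $\sigma_k>0$, $\theta_1\ge1$, and $m_k(s)=T_{f,p}(x_k,s)+\frac{\sigma_k}{(p+1)!}\|s\|^{p+1}$. Then there exists $s_k\in\mathbb{R}^n$ such that $$m_k(s_k)\le m_k(0)\qquad\text{and}\qquad \|\nabla_s T_{f,p}(x_k,s_k)\|_{r,1}\le\theta_1\frac{\sigma_k}{p!}\|s_k\|^p.$$
   Context: $\|\cdot\|$ is an arbitrary (possibly non-smooth) norm on $\mathbb{R}^n$, $\langle\cdot,\cdot\rangle$ the Euclidean inner product, and $\|v\|_{r,1}=\max_{\|s\|=1}|\langle v,s\rangle|$ the dual norm. $T_{f,p}(x,s)=f(x)+\sum_{\ell=1}^p\frac{1}{\ell!}\nabla^\ell f(x)[s]^\ell$ is the $p$-th order Taylor expansion of $f$ at $x$; $\nabla_sT_{f,p}(x,s)$ is its gradient in $s$. *)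

(* Defs.v *)
From HB Require Import structures.
From mathcomp Require Import all_boot all_order all_algebra.
From mathcomp Require Import all_classical all_reals all_analysis.
Set Implicit Arguments. Unset Strict Implicit. Unset Printing Implicit Defensive.
Import Order.TTheory GRing.Theory Num.Theory.
Import numFieldNormedType.Exports.
Local Open Scope classical_set_scope.
Local Open Scope ring_scope.

Section Defs.
Variables (R : realType) (n : nat).
Notation V := 'rV[R]_n.

Definition ebasis (i : 'I_n) : V := delta_mx 0 i.

Definition inner (u v : V) : R := \sum_(i < n) u 0 i * v 0 i.

Definition is_norm (nrm : V -> R) : Prop :=
  [/\ forall x, nrm x = 0 -> x = 0,
      forall (a : R) x, nrm (a *: x) = `|a| * nrm x &
      forall x y, nrm (x + y) <= nrm x + nrm y].

(* dual norm  ||v||_{r,1} = max_{||s|| = 1} |<v,s>| *)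
Definition dualnorm (nrm : V -> R) (v : V) : R :=
  sup [set `|inner v s| | s in [set s | nrm s = 1]].

Fixpoint Ck (k : nat) (f : V -> R) : Prop :=
  match k with
  | O => continuous f
  | k'.+1 => (forall x, differentiable f x) /\
             (forall i : 'I_n, Ck k' (fun x => 'D_(ebasis i) f x))
  end.

(* iterated directional derivative: dirn l s f x = nabla^l f(x)[s]^l *)
Definition dirn (l : nat) (s : V) (f : V -> R) : V -> R :=
  iter l (fun g y => 'D_s g y) f.

Definition taylor (f : V -> R) (p : nat) (x s : V) : R :=
  f x + \sum_(1 <= l < p.+1) (l`!%:R)^-1 * dirn l s f x.

Definition gradT (f : V -> R) (p : nat) (x s : V) : V :=
  \row_(i < n) 'D_(ebasis i) (taylor f p x) s.

Definition model (nrm : V -> R) (f : V -> R) (p : nat) (x : V) (sigma : R)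
  (s : V) : R :=
  taylor f p x s + sigma / (p.+1)`!%:R * nrm s ^+ p.+1.

End Defs.

(* Main.v *)
Require Import Defs.
From HB Require Import structures.
From mathcomp Require Import all_boot all_order all_algebra.
From mathcomp Require Import all_classical all_reals all_analysis.
From mathcomp Require Import ring lra.
Import Order.TTheory GRing.Theory Num.Theory.
Import numFieldNormedType.Exports.
Set Implicit Arguments. Unset Strict Implicit.
Local Open Scope ring_scope.


Section Helpers.
Variables (R : realType) (n : nat).
Notation V := 'rV[R]_n.
Implicit Types (g : V -> R).

Lemma D_expand g (y s : V) : differentiable g y ->
  'D_s g y = \sum_(i < n) s 0 i * 'D_(ebasis R i) g y.
Proof.
move=> dg; rewrite deriveE // {1}(row_sum_delta s) linear_sum.
apply: eq_bigr => i _; rewrite linearZ /= deriveE //.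
Qed.

Lemma Ck_cst k (c : R) : Ck k (fun _ : V => c).
Proof.
elim: k c => [|k IH] c /=; first exact: cst_continuous.
split=> [x|i]; first exact: differentiable_cst.
have -> : (fun x : V => 'D_(ebasis R i) (fun _ : V => c) x) = fun _ => 0.
  by apply: funext => x; exact: derive_cst.
exact: IH.
Qed.

Lemma Ck_add k g1 g2 : Ck k g1 -> Ck k g2 -> Ck k (fun y => g1 y + g2 y).
Proof.
elim: k g1 g2 => [|k IH] g1 g2 /=.
  by move=> c1 c2 x; apply: (continuousD (c1 x) (c2 x)).
move=> [d1 D1] [d2 D2]; split=> [x|i].
  exact: (differentiableD (d1 x) (d2 x)).
have -> : (fun x => 'D_(ebasis R i) (fun y => g1 y + g2 y) x) =
  fun x => 'D_(ebasis R i) g1 x + 'D_(ebasis R i) g2 x.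
  apply: funext => x; rewrite -deriveD //; exact: diff_derivable.
exact: IH.
Qed.

Lemma Ck_scal k (c : R) g : Ck k g -> Ck k (fun y => c * g y).
Proof.
elim: k g => [|k IH] g /=.
  move=> cg x; exact: (continuousM (@cst_continuous _ _ c x) (cg x)).
move=> [d D]; split=> [x|i].
  by apply: differentiableM => //; exact: differentiable_cst.
have -> : (fun x => 'D_(ebasis R i) (fun y => c * g y) x) =
  fun x => c * 'D_(ebasis R i) g x.
  apply: funext => x; rewrite -deriveMl //; exact: diff_derivable.
exact: IH.
Qed.

Lemma Ck_sumseq k (I : Type) (r : seq I) (F : I -> V -> R) :
  (forall i, Ck k (F i)) -> Ck k (fun y => \sum_(i <- r) F i y).
Proof.
move=> H; elim: r => [|a r IHr].
  have -> : (fun y : V => \sum_(i <- [::]) F i y) = fun _ => 0.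
    by apply: funext => y; rewrite big_nil.
  exact: Ck_cst.
have -> : (fun y : V => \sum_(i <- a :: r) F i y) =
   fun y => F a y + \sum_(i <- r) F i y.
  by apply: funext => y; rewrite big_cons.
exact: Ck_add.
Qed.

Lemma Ck_weaken k g : Ck k.+1 g -> Ck k g.
Proof.
elim: k g => [|k IH] g.
  by move=> [d _] x; exact: differentiable_continuous.
by move=> [d D]; split=> // i; apply: IH; exact: D.
Qed.

Lemma Ck_le l k g : (l <= k)%N -> Ck k g -> Ck l g.
Proof.
move=> /subnK <-; elim: (k - l)%N => [//|m IH] H.
by apply: IH; apply: Ck_weaken; rewrite -addSn.
Qed.

Lemma Ck_D k g (s : V) : Ck k.+1 g -> Ck k (fun y => 'D_s g y).
Proof.
move=> Hg; have [d D] := Hg.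
have -> : (fun y => 'D_s g y) =
   fun y => \sum_(i < n) s 0 i * 'D_(ebasis R i) g y.
  by apply: funext => y; exact: D_expand.
apply: Ck_sumseq => i; apply: Ck_scal; exact: D.
Qed.

End Helpers.


Section Helpers2.
Variables (R : realType) (n : nat).
Notation V := 'rV[R]_n.
Implicit Types (g : V -> R).

Lemma dirnS l (s : V) g : dirn l.+1 s g = dirn l s (fun y => 'D_s g y).
Proof. by rewrite /dirn iterSr. Qed.

Lemma dirn_lin l (s : V) (G : 'I_n -> V -> R) (c : 'I_n -> R) :
  (forall i, Ck l (G i)) -> forall y,
  dirn l s (fun y => \sum_(i < n) c i * G i y) y =
  \sum_(i < n) c i * dirn l s (G i) y.
Proof.
elim: l G => [|l IH] G HG y; first by [].
rewrite dirnS.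
have -> : (fun y => 'D_s (fun y => \sum_(i < n) c i * G i y) y) =
   fun y => \sum_(i < n) c i * 'D_s (G i) y.
  apply: funext => z.
  have -> : (fun y => \sum_(i < n) c i * G i y) =
     \sum_(i < n) (fun y => c i * G i y) by rewrite fct_sumE.
  rewrite derive_sum; last first.
    move=> i; apply: diff_derivable; apply: differentiableM.
      exact: differentiable_cst.
    by have [d _] := HG i; exact: d.
  apply: eq_bigr => i _; rewrite -deriveMl //.
  by apply: diff_derivable; have [d _] := HG i; exact: d.
rewrite IH; last by move=> i; apply: Ck_D.
by apply: eq_bigr => i _; rewrite dirnS.
Qed.

Fixpoint Ep (l : nat) (g : V -> R) (s y : V) : R :=
  if l is l'.+1 then \sum_(i < n) s 0 i * Ep l' (fun z => 'D_(ebasis R i) g z) s y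
  else g y.

Fixpoint Mb (l : nat) (g : V -> R) (y : V) : R :=
  if l is l'.+1 then \sum_(i < n) Mb l' (fun z => 'D_(ebasis R i) g z) y
  else `|g y|.

Lemma dirn_E l g : Ck l g -> forall s y, dirn l s g y = Ep l g s y.
Proof.
elim: l g => [|l IH] g Hg s y; first by [].
rewrite dirnS /=.
have [d D] := Hg.
have -> : (fun y => 'D_s g y) =
   fun y => \sum_(i < n) s 0 i * 'D_(ebasis R i) g y.
  by apply: funext => z; exact: D_expand.
rewrite dirn_lin; last by move=> i; exact: D.
apply: eq_bigr => i _; rewrite IH //; exact: D.
Qed.

Lemma Ep_diff l g y s : differentiable (fun s => Ep l g s y) s.
Proof.
elim: l g => [|l IH] g /=; first exact: differentiable_cst.
have -> : (fun s : V => \sum_(i < n) s 0 i * Ep l (fun z => 'D_(ebasis R i) g z) s y)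
   = \sum_(i < n) (fun s : V => s 0 i * Ep l (fun z => 'D_(ebasis R i) g z) s y)
   by rewrite fct_sumE.
apply: differentiable_sum => i; apply: differentiableM => //.
exact: differentiable_coord.
Qed.

Lemma coord_le (s : V) i : `|s 0 i| <= `|s|.
Proof.
rewrite [leRHS]/Num.norm /= mx_normrE; apply/bigmax_geP; right => /=.
by exists (0, i).
Qed.

Lemma Mb_ge0 l g y : 0 <= Mb l g y.
Proof.
elim: l g => [|l IH] g /=; first exact: normr_ge0.
by apply: sumr_ge0 => i _.
Qed.

Lemma Ep_bound l g y s : `|Ep l g s y| <= Mb l g y * `|s| ^+ l.
Proof.
elim: l g => [|l IH] g /=; first by rewrite expr0 mulr1.
apply: (le_trans (ler_norm_sum _ _ _)).
rewrite mulr_suml; apply: ler_sum => i _.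
rewrite normrM exprS mulrCA.
apply: ler_pM => //; first exact: coord_le.
Qed.

Lemma Ep0 l g y : Ep l.+1 g 0 y = 0.
Proof. by rewrite /= big1 // => i _; rewrite mxE mul0r. Qed.

End Helpers2.


Section NormFacts.
Variables (R : realType) (n : nat) (N : 'rV[R]_n -> R).
Notation V := 'rV[R]_n.
Hypothesis hN : is_norm N.

Lemma N0 : N 0 = 0.
Proof. by case: hN => _ hZ _; rewrite -(scale0r 0) hZ normr0 mul0r. Qed.

Lemma NN x : N (- x) = N x.
Proof. by case: hN => _ hZ _; rewrite -scaleN1r hZ normrN1 mul1r. Qed.

Lemma NZ a x : N (a *: x) = `|a| * N x.
Proof. by case: hN. Qed.

Lemma ND x y : N (x + y) <= N x + N y.
Proof. by case: hN. Qed.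

Lemma N_ge0 x : 0 <= N x.
Proof.
have := ND x (- x); rewrite subrr N0 NN.
by rewrite -mulr2n -mulr_natl pmulr_rge0.
Qed.

Lemma N_eq0 x : N x = 0 -> x = 0.
Proof. by case: hN => H _ _; exact: H. Qed.

Lemma N_sum (I : Type) (r : seq I) (F : I -> V) :
  N (\sum_(i <- r) F i) <= \sum_(i <- r) N (F i).
Proof.
elim: r => [|a r IH]; first by rewrite !big_nil N0.
rewrite !big_cons; apply: (le_trans (ND _ _)); exact: lerD.
Qed.

Definition KN := \sum_(i < n) N (ebasis R i).

Lemma KN_ge0 : 0 <= KN.
Proof. by apply: sumr_ge0 => i _; exact: N_ge0. Qed.

Lemma N_upper x : N x <= KN * `|x|.
Proof.
rewrite {1}(row_sum_delta x).
have := N_sum (index_enum (ordinal n)) (fun j => x 0 j *: delta_mx 0 j) => H.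
apply: (le_trans H).
rewrite /KN mulr_suml; apply: ler_sum => i _; rewrite NZ mulrC.
apply: ler_wpM2l; first exact: N_ge0.
exact: coord_le.
Qed.

Lemma N_dist x y : `|N x - N y| <= KN * `|x - y|.
Proof.
apply: le_trans (N_upper _).
have h1 : N x <= N (x - y) + N y by have := ND (x - y) y; rewrite subrK.
have h2 : N y <= N (x - y) + N x.
  by have := ND (y - x) x; rewrite subrK -opprB NN.
rewrite ler_norml; apply/andP; split; lra.
Qed.

Lemma N_cont : continuous N.
Proof.
move=> x; apply/(@cvgrPdist_lt _ _ _ (nbhs x) (nbhs_filter x)) => e e0.
apply/(@nbhs_normP _ V x (fun t => `|N x - N t| < e)).
have K1 : 0 < KN + 1 by rewrite ltr_wpDl // KN_ge0.
exists (e / (KN + 1)); first by rewrite /= divr_gt0.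
move=> y /= xy.
apply: le_lt_trans (N_dist _ _) _.
rewrite -(ltr_pM2l K1) mulrCA mulfV ?mulr1 ?gt_eqF // in xy.
apply: le_lt_trans xy; apply: ler_wpM2r => //; rewrite ?lerDl //.
Qed.

End NormFacts.


Local Open Scope classical_set_scope.
Local Open Scope ring_scope.
Section NormEquiv.
Variables (R : realType) (n : nat) (N : 'rV[R]_n -> R).
Notation V := 'rV[R]_n.
Hypothesis hN : is_norm N.

Lemma normalize (s : V) : s != 0 -> `| `|s|^-1 *: s | = 1.
Proof.
move=> s0; rewrite normrZ ger0_norm ?invr_ge0 // mulVf //.
by rewrite normr_eq0.
Qed.

Lemma N_lower : exists2 a : R, 0 < a & forall s : V, a * `|s| <= N s.
Proof.
case: (pselect (exists s1 : V, `|s1| = 1)) => [[s1 hs1]|nos]; last first.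
  exists 1 => // s; have [->|s0] := eqVneq s 0.
    by rewrite normr0 mulr0 (N_ge0 hN).
  by exfalso; apply: nos; exists (`|s|^-1 *: s); exact: normalize.
pose A := [set s : V | `|s| = 1].
have A0 : A !=set0 by exists s1.
have cA : compact A.
  apply: bounded_closed_compact.
    exists 1; split; first by rewrite realE ler01.
    by move=> M M1 x /= ->; exact: ltW.
  have -> : A = Num.norm @^-1` [set x : R | x = 1] by [].
  by move: (@norm_continuous R V) => /continuous_closedP; apply; exact: closed_eq.
have cN : {within A, continuous N} by apply: continuous_subspaceT; exact: (N_cont hN).
have [c cA' cmin] := compact_EVT_min A0 cA cN.
have c1 : `|c| = 1 by move: cA'; rewrite inE.
have Nc : 0 < N c.
  rewrite lt_def (N_ge0 hN) andbT; apply/eqP => /(N_eq0 hN) c0.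
  by move: c1; rewrite c0 normr0 => /eqP; rewrite eq_sym oner_eq0.
exists (N c) => // s; have [->|s0] := eqVneq s 0.
  by rewrite normr0 mulr0 (N_ge0 hN).
have := cmin (`|s|^-1 *: s); rewrite inE => /(_ (normalize s0)).
rewrite (NZ hN) ger0_norm ?invr_ge0 // => h.
have sp : 0 < `|s| by rewrite normr_gt0.
by rewrite -ler_pdivlMr // mulrC.
Qed.

End NormEquiv.

Unset Implicit Arguments. Set Strict Implicit.
Local Open Scope classical_set_scope.
Local Open Scope ring_scope.

Lemma powdiff (R : realType) (x y : R) k : 0 <= y -> y <= x ->
  x ^+ k.+1 - y ^+ k.+1 <= (x - y) * (k.+1)%:R * x ^+ k.
Proof.
move=> y0 yx; have x0 : 0 <= x by apply: le_trans yx.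
elim: k => [|k IH]; first by rewrite !expr1 expr0 !mulr1.
have e1 : x ^+ k.+2 - y ^+ k.+2 = x * (x ^+ k.+1 - y ^+ k.+1) + (x - y) * y ^+ k.+1.
  by rewrite !exprS; ring.
have hy : y ^+ k.+1 <= x ^+ k.+1 by apply: lerXn2r; rewrite // nnegrE.
rewrite e1.
have h1 : x * (x ^+ k.+1 - y ^+ k.+1) <= x * ((x - y) * (k.+1)%:R * x ^+ k).
  exact: ler_wpM2l.
have h2 : (x - y) * y ^+ k.+1 <= (x - y) * x ^+ k.+1.
  by apply: ler_wpM2l; rewrite ?subr_ge0.
apply: le_trans (lerD h1 h2) _.
suff -> : x * ((x - y) * (k.+1)%:R * x ^+ k) + (x - y) * x ^+ k.+1 = (x - y) * (k.+2)%:R * x ^+ k.+1 by [].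
rewrite exprS; ring.
Qed.

Lemma diff_sumseq (R : realType) n (I : Type) (r : seq I) (F : I -> 'rV[R]_n -> R) s :
  (forall i, differentiable (F i) s) ->
  differentiable (fun x => \sum_(i <- r) F i x) s.
Proof.
move=> H; elim: r => [|a r IH].
  have -> : (fun x : 'rV[R]_n => \sum_(i <- [::]) F i x) = cst 0.
    by apply: funext => x; rewrite big_nil.
  exact: differentiable_cst.
have -> : (fun x => \sum_(i <- a :: r) F i x) = F a + (fun x => \sum_(i <- r) F i x).
  by apply: funext => x; rewrite big_cons.
exact: differentiableD.
Qed.

Theorem corollary2p3 (R : realType) (n p : nat) (nrm : 'rV[R]_n -> R)
  (f : 'rV[R]_n -> R) (xk : 'rV[R]_n) (sigmak theta1 : R) :
  is_norm nrm -> (1 <= p)%N -> Ck p f -> 0 < sigmak -> 1 <= theta1 ->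
  exists sk : 'rV[R]_n,
    model nrm f p xk sigmak sk <= model nrm f p xk sigmak 0 /\
    dualnorm nrm (gradT f p xk sk) <= theta1 * (sigmak / p`!%:R) * nrm sk ^+ p.
Proof.
move=> hN p1 hf sig0 th1.
set c := sigmak / (p.+1)`!%:R.
have c0 : 0 < c by rewrite divr_gt0 // ltr0n fact_gt0.
pose Tf := fun s : 'rV[R]_n =>
  f xk + \sum_(1 <= l < p.+1) (l`!%:R)^-1 * Ep l f s xk.
have hT : taylor f p xk = Tf.
  apply: funext => s; rewrite /taylor /Tf; congr (_ + _).
  apply: eq_big_nat => l /andP[_ lp]; by rewrite (dirn_E (Ck_le (ltnSE lp) hf)).
have Tdiff : forall s, differentiable Tf s.
  move=> s; rewrite /Tf.
  have -> : (fun s => f xk + \sum_(1 <= l < p.+1) (l`!%:R)^-1 * Ep l f s xk) =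
     cst (f xk) + (fun s => \sum_(1 <= l < p.+1) (l`!%:R)^-1 * Ep l f s xk) by [].
  apply: differentiableD; first exact: differentiable_cst.
  apply: diff_sumseq => l.
  apply: differentiableM; first exact: differentiable_cst.
  exact: Ep_diff.
pose Cb := \sum_(1 <= l < p.+1) (l`!%:R)^-1 * Mb l f xk.
have Cb0 : 0 <= Cb.
  by apply: sumr_ge0 => l _; apply: mulr_ge0; [rewrite invr_ge0|exact: Mb_ge0].
have Tgrow : forall s, 1 <= `|s| -> `|Tf s - f xk| <= Cb * `|s| ^+ p.
  move=> s s1; rewrite /Tf addrC addKr.
  apply: le_trans (ler_norm_sum _ _ _) _.
  rewrite /Cb mulr_suml; apply: ler_sum_nat => l /andP[_ lp].
  rewrite normrM ger0_norm ?invr_ge0 // -mulrA; apply: ler_wpM2l.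
    by rewrite invr_ge0.
  apply: le_trans (Ep_bound _ _ _ _) _; apply: ler_wpM2l; first exact: Mb_ge0.
  by apply: ler_weXn2l.
have T0 : Tf 0 = f xk.
  rewrite /Tf big_nat big1 ?addr0 // => -[|l] // _; by rewrite Ep0 mulr0.
have [a a0 ha] := N_lower hN.
pose K0 := c * a ^+ p.+1.
have K00 : 0 < K0 by rewrite /K0 mulr_gt0 // exprn_gt0.
pose rho := 1 + Cb / K0.
have rho1 : 1 <= rho by rewrite /rho lerDl divr_ge0 // ltW.
have hm : model nrm f p xk sigmak = fun s => Tf s + c * nrm s ^+ p.+1.
  by apply: funext => s; rewrite /model hT.
have m0 : model nrm f p xk sigmak 0 = f xk.
  by rewrite hm /= T0 (N0 hN) expr0n /= mulr0 addr0.
have far : forall s, rho < `|s| ->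
    model nrm f p xk sigmak 0 < model nrm f p xk sigmak s.
  move=> s hs; rewrite m0 hm /=.
  have r1 : 1 <= `|s| by apply: le_trans rho1 (ltW hs).
  have hg := Tgrow s r1; rewrite ler_norml in hg.
  case/andP: hg => hg _.
  have hcb : Cb < K0 * `|s|.
    have : Cb / K0 < `|s| by apply: le_lt_trans hs; rewrite /rho lerDr.
    by rewrite ltr_pdivrMr // mulrC.
  have rp : 0 < `|s| ^+ p by rewrite exprn_gt0 // (lt_le_trans ltr01 r1).
  have h3 : Cb * `|s| ^+ p < K0 * `|s| * `|s| ^+ p by rewrite ltr_pM2r.
  have hpow : (a * `|s|) ^+ p.+1 <= nrm s ^+ p.+1.
    by apply: lerXn2r; rewrite ?nnegrE ?(N_ge0 hN) ?mulr_ge0 // ltW.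
  have h4 : K0 * `|s| * `|s| ^+ p <= c * nrm s ^+ p.+1.
    have -> : K0 * `|s| * `|s| ^+ p = c * (a * `|s|) ^+ p.+1.
      by rewrite /K0 exprMn [`|s| ^+ p.+1]exprS; ring.
    by apply: ler_wpM2l => //; exact: ltW.
  lra.
pose B := [set s : 'rV[R]_n | `|s| <= rho].
have B0 : B !=set0 by exists 0; rewrite /B /= normr0 (le_trans ler01).
have cB : compact B.
  apply: bounded_closed_compact.
    exists rho; split; first by rewrite realE (le_trans ler01).
    by move=> M hM x /= hx; apply: le_trans hx (ltW hM).
  have -> : B = Num.norm @^-1` [set x : R | x <= rho] by [].
  by move: (@norm_continuous R 'rV[R]_n) => /continuous_closedP; apply; exact: closed_le.
have cm : {within B, continuous (model nrm f p xk sigmak)}.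
  apply: continuous_subspaceT; rewrite hm => x.
  apply: continuousD; first exact: differentiable_continuous.
  apply: continuousM; first exact: cst_continuous.
  have H1 : {for x, continuous nrm} := @N_cont R n nrm hN x.
  have H2 : {for nrm x, continuous (fun y : R => y ^+ p.+1)} := @exprn_continuous R p.+1 (nrm x).
  exact: (continuous_comp H1 H2).
have [ss sB smin] := compact_EVT_min B0 cB cm.
have gmin : forall t, model nrm f p xk sigmak ss <= model nrm f p xk sigmak t.
  move=> t; case: (lerP `|t| rho) => ht; first by apply: smin; rewrite inE.
  apply: le_trans (ltW (far t ht)); apply: smin; rewrite inE /B /= normr0.
  exact: le_trans ler01 rho1.
exists ss; split; first exact: gmin.
set Ns := nrm ss.
have Ns0 : 0 <= Ns by exact: (N_ge0 hN).
pose K := sigmak / p`!%:R * Ns ^+ p.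
have K0' : 0 <= K by rewrite /K mulr_ge0 ?exprn_ge0 // divr_ge0 // ltW.
have cK : c * (p.+1)%:R = sigmak / p`!%:R.
  rewrite /c factS natrM; field.
  by rewrite pnatr_eq0 -lt0n fact_gt0 /= addrC natr1 pnatr_eq0.
have key : forall d, - (K * nrm d) <= 'D_d Tf ss.
  move=> d.
  pose q := fun h : R => h^-1 *: ((Tf \o shift ss) (h *: d) - Tf ss).
  have qc : q @ 0^' --> 'D_d Tf ss by apply: diff_derivable.
  have qc' : q @ 0^'+ --> 'D_d Tf ss.
    apply: cvg_trans qc; apply: cvg_app; apply: within_subset => h /= h0.
    exact: lt0r_neq0.
  pose C2 := - (c * (p.+1)%:R * nrm d).
  pose rr := fun h : R => C2 * (Ns + h * nrm d) ^+ p.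
  have rc : rr @ 0^'+ --> C2 * Ns ^+ p.
    have -> : C2 * Ns ^+ p = rr 0 by rewrite /rr mul0r addr0.
    apply: cvg_at_right_filter.
    have H1 : {for (0:R), continuous (fun h : R => Ns + h * nrm d)}.
      apply: continuousD; first exact: cst_continuous.
      apply: continuousM; [exact: cvg_id | exact: cst_continuous].
    exact: (continuousM (@cst_continuous _ _ C2 0)
      (continuous_comp H1 (@exprn_continuous R p _))).
  have := ler_cvg_to rc qc'.
  have -> : C2 * Ns ^+ p = - (K * nrm d) by rewrite /C2 /K -cK; ring.
  apply; near=> h.
  have h0 : 0 < h by near: h; exact: nbhs_right_gt.
  rewrite /q /rr /=.
  have gm := gmin (h *: d + ss); rewrite hm /= in gm.
  have NdN : 0 <= nrm d := N_ge0 hN d.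
  have hX : nrm (h *: d + ss) <= Ns + h * nrm d.
    by apply: le_trans (ND hN _ _) _; rewrite (NZ hN) (ger0_norm (ltW h0)) addrC.
  have hX2 : nrm (h *: d + ss) ^+ p.+1 <= (Ns + h * nrm d) ^+ p.+1.
    by apply: lerXn2r; rewrite // nnegrE ?(N_ge0 hN) // (le_trans _ hX) ?(N_ge0 hN).
  have hX3 : (Ns + h * nrm d) ^+ p.+1 - Ns ^+ p.+1 <=
      (Ns + h * nrm d - Ns) * (p.+1)%:R * (Ns + h * nrm d) ^+ p.
    by apply: powdiff; rewrite // lerDl mulr_ge0 // ltW.
  have e : Ns + h * nrm d - Ns = h * nrm d by rewrite addrC addKr.
  rewrite e in hX3.
  have c1 := ler_wpM2l (ltW c0) hX2.
  have c2 := ler_wpM2l (ltW c0) hX3.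
  change (C2 * (Ns + h * nrm d) ^+ p <= h^-1 * (Tf (h *: d + ss) - Tf ss)).
  rewrite -(ler_pM2l h0) [X in _ <= X]mulrA mulfV ?gt_eqF // mul1r /C2.
  lra.
set g := gradT f p xk ss.
have gradE : forall d, inner g d = 'D_d Tf ss.
  move=> d; rewrite /inner /g /gradT hT (D_expand _ (Tdiff ss)).
  by apply: eq_bigr => i _; rewrite mxE mulrC.
have innerN : forall d, inner g (- d) = - inner g d.
  by move=> d; rewrite /inner -sumrN; apply: eq_bigr => i _; rewrite !mxE mulrN.
have bound : forall d, `|inner g d| <= K * nrm d.
  move=> d; rewrite ler_norml; apply/andP; split; first by rewrite gradE key.
  have := key (- d); rewrite -gradE innerN (NN hN); lra.
rewrite /dualnorm.
set E := [set `|inner g s| | s in [set s | nrm s = 1]].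
have KK : K <= theta1 * (sigmak / p`!%:R) * Ns ^+ p.
  rewrite -mulrA -/K -{1}(mul1r K); exact: ler_wpM2r.
case: (pselect (E !=set0)) => [ne|e0].
  apply: le_trans KK; apply: ge_sup => // y [s /= s1 <-].
  by have := bound s; rewrite s1 mulr1.
have -> : E = set0.
  by apply/seteqP; split => // y Ey; exfalso; apply: e0; exists y.
rewrite sup0; exact: le_trans K0' KK.
Unshelve. all: end_near.
Qed.
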